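(* Let $f_d\in\mathbb{Z}[t]$ be an irreducible polynomial of degree $d$ with leading coefficient $A$, and define $\phi_d(x,y)=y^df_d(x/y)$. Suppose that there exists a quadratic polynomial $g\in\mathbb{Q}[t]$ such that $f_d(g(t))$ is reducible in $\mathbb{Q}[t]$. Then the equation $Az^2=\phi_d(x,y)$ has a solution $(x,y,z)\in\mathbb{Q}^3$ with $yz\ne 0$. *)

(* Defs.v *)
From mathcomp Require Import all_boot all_order all_algebra.
Set Implicit Arguments. Unset Strict Implicit. Unset Printing Implicit Defensive.
Import GRing.Theory Num.Theory.
Local Open Scope ring_scope.

Definition polyQ (f : {poly int}) : {poly rat} := map_poly (fun a : int => a%:~R) f.

(* phi_d(x,y) = y^d f(x/y), written as the homogenization of f of degree
   d = deg f:  sum_i f_i x^i y^(d-i). *)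
Definition phi (f : {poly int}) (x y : rat) : rat :=
  \sum_(i < size f) (f`_i)%:~R * x ^+ i * y ^+ ((size f).-1 - i).

(* Main.v *)
Require Import Defs.
From mathcomp Require Import all_boot all_order all_algebra.
From mathcomp Require Import ring zify.
From Stdlib Require Import Classical.
Import GRing.Theory Num.Theory.
Local Open Scope ring_scope.

Lemma N1 (a b : nat) : (0 < a -> a.-1 = (b.-1 * 2) -> 2 < b -> 1 < a)%N. Proof. lia. Qed.
Lemma N2 (a b : nat) : (1 < a -> ((a + a).-1).-1 = (1.-1 * b) -> False)%N. Proof. lia. Qed.
Lemma N3 (a b c : nat) : ((a+a).-1 = c -> c.-1 = (b.-1 * 2) -> 1 < a -> 2 < b -> a = b)%N. Proof. lia. Qed.
Lemma N4 (a b : nat) : (1 < a -> a.-1 = (1.-1 * b) -> False)%N. Proof. lia. Qed.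
Lemma N5 (i n : nat) : (i < n -> i <= n.-1)%N. Proof. lia. Qed.
Lemma N6 (a : nat) : (1 < a -> a < 2 -> False)%N. Proof. lia. Qed.
Arguments N1 {a b}. Arguments N2 {a b}. Arguments N3 {a b c}. Arguments N4 {a b}. Arguments N5 {i n}. Arguments N6 {a}.

Definition X2 : {poly rat} := 'X * 'X.
Definition nX : {poly rat} := - 'X.

Lemma size_X2 : size X2 = 3%N.
Proof. by rewrite /X2 -expr2 size_polyXn. Qed.

Lemma size_nX : size nX = 2%N.
Proof. by rewrite /nX size_polyN size_polyX. Qed.

Lemma compN (p q : {poly rat}) : (- p) \Po q = - (p \Po q).
Proof. by rewrite -[- p]sub0r comp_polyB comp_poly0 sub0r. Qed.

Lemma nX_nX : nX \Po nX = 'X.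
Proof. by rewrite /nX compN comp_polyX opprK. Qed.

Lemma X2_nX : X2 \Po nX = X2.
Proof. by rewrite /X2 comp_polyM comp_polyX /nX mulrNN. Qed.

Lemma nXK (p : {poly rat}) : (p \Po nX) \Po nX = p.
Proof. by rewrite -comp_polyA nX_nX comp_polyXr. Qed.

Lemma evenX2 (h : {poly rat}) : (h \Po X2) \Po nX = h \Po X2.
Proof. by rewrite -comp_polyA X2_nX. Qed.

Lemma L_even (m : {poly rat}) : m \Po nX = m -> m = even_poly m \Po X2.
Proof.
move=> hm.
have hd := poly_even_odd m.
rewrite /X2 -expr2.
set e := even_poly m \Po _ in hd *; set o := odd_poly m \Po _ in hd.
have he : e \Po nX = e by rewrite /e -comp_polyA expr2 X2_nX.
have ho : o \Po nX = o by rewrite /o -comp_polyA expr2 X2_nX.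
have : m \Po nX = e - o * 'X.
  by rewrite -{1}hd comp_polyD comp_polyM he ho /nX comp_polyX mulrN.
rewrite hm -{1}hd => /eqP; rewrite -subr_eq0 opprB addrC -!addrA addKr.
rewrite -mulr2n -mulr_natl mulf_eq0 => /orP [|/eqP ho0]; last by rewrite -{1}hd ho0 addr0.
by rewrite -polyC_natr polyC_eq0.
Qed.

Lemma L_odd (p : {poly rat}) : p \Po nX = - p -> root p 0.
Proof.
move=> hp; apply/eqP.
have : (p \Po nX).[0] = p.[0] by rewrite horner_comp /nX hornerN hornerX oppr0.
rewrite hp hornerN => /eqP; rewrite eq_sym -subr_eq0 opprK -mulr2n mulrn_eq0 /= => /eqP. done.
Qed.

Lemma X2_inj (a b : {poly rat}) : a \Po X2 = b \Po X2 -> a = b.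
Proof.
move=> /eqP; rewrite -subr_eq0 -comp_polyB comp_poly_eq0 ?size_X2 //.
by rewrite subr_eq0 => /eqP.
Qed.

Lemma L_quot (m h : {poly rat}) : m %| h \Po X2 -> m \Po nX = m -> m != 0 ->
  even_poly m %| h.
Proof.
move=> hd hm m0.
have hH := divpK hd.
set r := (h \Po X2) %/ m in hH.
have hr : r \Po nX = r.
  apply: (mulIf m0).
  by rewrite -{1}hm -comp_polyM hH evenX2.
rewrite (L_even _ hr) (L_even _ hm) -comp_polyM in hH.
move/X2_inj: hH => <-.
exact: dvdp_mull.
Qed.

Lemma irr_comp_lin (p q qi : {poly rat}) : size q = 2%N -> size qi = 2%N ->
  qi \Po q = 'X -> q \Po qi = 'X -> irreducible_poly p -> irreducible_poly (p \Po q).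
Proof.
move=> sq sqi h1 h2 [sp ip]; split; first by rewrite size_comp_poly2.
move=> r sr rd.
have : r \Po qi %| p.
  by have := dvdp_comp_poly qi rd; rewrite -comp_polyA h2 comp_polyXr.
move=> /(ip _ _).
rewrite size_comp_poly2 // => /(_ sr) /andP [d1 d2].
apply/andP; split.
  by have := dvdp_comp_poly q d1; rewrite -comp_polyA h1 comp_polyXr.
by have := dvdp_comp_poly q d2; rewrite -comp_polyA h1 comp_polyXr.
Qed.

Lemma exists_irr n (q : {poly rat}) : (size q <= n)%N -> (1 < size q)%N ->
  exists p, irreducible_poly p /\ p %| q.
Proof.
elim: n q => [|n IH] q sq s1; first by move: (leq_trans s1 sq).
case: (classic (irreducible_poly q)) => [iq|niq]; first by exists q.
have : exists r : {poly rat}, size r != 1%N /\ r %| q /\ ~~ (r %= q).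
  apply: NNPP => hn; apply: niq; split => // r sr rd.
  apply/negPn/negP => hne; apply: hn; by exists r.
move=> [r [sr [rd rne]]].
have q0 : q != 0 by rewrite -size_poly_gt0 (ltn_trans _ s1).
have r0 : r != 0 by apply: contraNneq q0 => r0; move: rd; rewrite r0 dvd0p.
have srq : (size r < size q)%N.
  rewrite ltn_neqAle dvdp_leq // andbT dvdp_size_eqp //.
have [p [ip pd]] : exists p, irreducible_poly p /\ p %| r.
  apply: (IH r).
    by rewrite -ltnS (leq_trans srq).
  by rewrite ltn_neqAle eq_sym sr size_poly_gt0 r0.
by exists p; split => //; apply: dvdp_trans rd.
Qed.

Lemma key (h : {poly rat}) : irreducible_poly h -> (2 < size h)%N ->
  ~ irreducible_poly (h \Po X2) ->
  exists (p : {poly rat}) (lam : rat), size p = size h /\ h \Po X2 = lam *: (p * (p \Po nX)).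
Proof.
move=> ih sh nH.
set H := h \Po X2 in nH *.
have h0 : h != 0 by apply: irredp_neq0.
have sH : (size H).-1 = ((size h).-1 * 2)%N by rewrite /H size_comp_poly size_X2.
have H0 : H != 0 by rewrite /H comp_poly_eq0 ?size_X2.
have sH1 : (1 < size H)%N.
  rewrite -size_poly_gt0 in H0. exact: (N1 H0 sH sh).
have : exists q : {poly rat}, size q != 1%N /\ q %| H /\ ~~ (q %= H).
  apply: NNPP => hn; apply: nH; split => // r sr rd.
  apply/negPn/negP => hne; apply: hn; by exists r.
move=> [q [sq [qH qne]]].
have q0 : q != 0 by apply: contraNneq H0 => r0; move: qH; rewrite r0 dvd0p.
have sqH : (size q < size H)%N.
  by rewrite ltn_neqAle dvdp_leq // andbT dvdp_size_eqp.
have [p [ip pq]] : exists p, irreducible_poly p /\ p %| q.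
  apply: (@exists_irr (size q)) => //.
  by rewrite ltn_neqAle eq_sym sq size_poly_gt0 q0.
have pH : p %| H by apply: dvdp_trans qH.
have p0 : p != 0 by apply: irredp_neq0.
have sp1 : (1 < size p)%N by case: ip.
have spH : (size p < size H)%N by apply: leq_ltn_trans (dvdp_leq q0 pq) sqH.
set p' := p \Po nX.
have p'H : p' %| H by have := dvdp_comp_poly nX pH; rewrite /H evenX2.
have sp' : size p' = size p by rewrite /p' size_comp_poly2 // size_nX.
have p'0 : p' != 0 by rewrite -size_poly_gt0 sp' size_poly_gt0.
case cp: (coprimep p p').
  set m := p * p'.
  have mH : m %| H by rewrite Gauss_dvdp // pH p'H.
  have mE : m \Po nX = m by rewrite /m comp_polyM nXK mulrC.
  have m0 : m != 0 by rewrite mulf_neq0.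
  have Md := L_quot _ _ mH mE m0.
  have sm : size m = (size p + size p).-1 by rewrite size_mul // sp'.
  have sM : size (even_poly m) != 1%N.
    apply/eqP => sM1; move: (size_comp_poly (even_poly m) X2).
    rewrite -(L_even _ mE) sM1 sm; exact: N2 sp1.
  have Me := ih _ sM Md.
  have mHe : m %= H.
    move/andP: Me => [d1 d2]; rewrite (L_even _ mE) /H.
    by apply/andP; split; apply: dvdp_comp_poly.
  exists p; move/eqpP: (mHe) => [[c1 c2] /andP [c10 c20] /= e].
  exists (c1 / c2); split.
    have := eqp_size mHe; rewrite sm => e2; exact: (N3 e2 sH sp1 sh).
  by rewrite -/m [c1 / c2]mulrC -scalerA e scalerA mulVf // scale1r.
have pp' : p %= p'.
  move: cp; rewrite irreducible_poly_coprime // => /negbFE pp.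
  by rewrite -dvdp_size_eqp // sp'.
move/eqpP: pp' => [[c1 c2] /andP [c10 c20] /= e].
have e' : c1 *: p' = c2 *: p by have := congr1 (fun u => u \Po nX) e; rewrite /= !comp_polyZ nXK.
have : c1 ^+ 2 == c2 ^+ 2.
  have : (c1 ^+ 2 - c2 ^+ 2) *: p = 0.
    have ee : c1 *: (c1 *: p) = c2 *: (c2 *: p) by rewrite e scalerA mulrC -scalerA e'.
    by rewrite scalerBl !expr2 -!scalerA ee subrr.
  by move/eqP; rewrite scaler_eq0 (negPf p0) orbF subr_eq0.
rewrite eqf_sqr => /orP [/eqP c12|/eqP c12].
  have pe : p' = p by apply: (scalerI c20); rewrite -e c12.
  have Pd := L_quot _ _ pH pe p0.
  have sP : size (even_poly p) != 1%N.
    apply/eqP => sP1; move: (size_comp_poly (even_poly p) X2).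
    rewrite -(L_even _ pe) sP1; exact: N4 sp1.
  have Pe := ih _ sP Pd.
  have pHe : p %= H.
    move/andP: Pe => [d1 d2]; rewrite (L_even _ pe) /H.
    by apply/andP; split; apply: dvdp_comp_poly.
  by move: spH; rewrite (eqp_size pHe) ltnn.
have pe : p' = - p.
  by apply: (scalerI c20); rewrite -e c12 scaleNr scalerN.
have rp := L_odd _ pe.
have Xp : 'X - 0%:P %| p by rewrite -root_factor_theorem.
have Xpe : 'X - 0%:P %= p by apply: ip => //; rewrite size_XsubC.
have XH : 'X - 0%:P %| H by apply: dvdp_trans pH.
have rh : root h 0.
  move: XH; rewrite -root_factor_theorem /H /root horner_comp.
  by rewrite /X2 hornerM hornerX mulr0.
have Xh : 'X - 0%:P %| h by rewrite -root_factor_theorem.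
have Xhe : 'X - 0%:P %= h by apply: ih => //; rewrite size_XsubC.
by move: sh; rewrite -(eqp_size Xhe) size_XsubC.
Qed.
Lemma sF f : size (polyQ f) = size f.
Proof. by rewrite /polyQ size_map_inj_poly //; apply: intr_inj. Qed.
Lemma lF f : lead_coef (polyQ f) = (lead_coef f)%:~R.
Proof. by rewrite /polyQ lead_coef_map_inj //; apply: intr_inj. Qed.
Lemma cF f i : (polyQ f)`_i = (f`_i)%:~R.
Proof. by rewrite /polyQ coef_map_id0. Qed.
Lemma phiE f x y : y != 0 -> phi f x y = y ^+ (size f).-1 * (polyQ f).[x / y].
Proof.
move=> y0; rewrite horner_coef sF /phi mulr_sumr; apply: eq_bigr => i _.
have hi : (i <= (size f).-1)%N by apply: N5.
rewrite cF -(subnK hi) exprD subnK // exprMn exprVn.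
field. by rewrite expf_neq0.
Qed.

Definition lin (a b : rat) : {poly rat} := a%:P * 'X + b%:P.

Lemma size_lin a b : a != 0 -> size (lin a b) = 2%N.
Proof. by move=> a0; rewrite /lin size_MXaddC polyC_eq0 (negPf a0) size_polyC a0. Qed.

Lemma lin_comp a b c e : lin a b \Po lin c e = lin (a * c) (a * e + b).
Proof.
rewrite /lin comp_polyD comp_polyM !comp_polyC comp_polyX !polyCD !polyCM; ring.
Qed.

Lemma lin10 : lin 1 0 = 'X.
Proof. by rewrite /lin mul1r addr0. Qed.

Lemma horner_lin a b x : (lin a b).[x] = a * x + b.
Proof. by rewrite /lin hornerD hornerM hornerC hornerX hornerC. Qed.

Lemma lead_lin a b : a != 0 -> lead_coef (lin a b) = a.
Proof.
move=> a0; rewrite lead_coefE size_lin // /lin coefD coefMX coefC /= coefC /= addr0 //.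
Qed.

Lemma g3 (g : {poly rat}) : size g = 3%N ->
  g = (g`_2)%:P * ('X * 'X) + (g`_1)%:P * 'X + (g`_0)%:P.
Proof.
move=> sg; rewrite -{1}[g]coefK poly_def sg !big_ord_recr big_ord0 /= add0r.
rewrite expr0 expr1 expr2 -!mul_polyC; ring.
Qed.

Lemma gshift (g : {poly rat}) : size g = 3%N ->
  exists a t c', a != 0 /\ a = g`_2 /\ g \Po lin 1 t = lin a c' \Po X2.
Proof.
move=> sg.
have a0 : g`_2 != 0.
  have : lead_coef g != 0 by rewrite lead_coef_eq0 -size_poly_gt0 sg.
  by rewrite lead_coefE sg.
have [t ht] : exists t, g`_1 = - (2 * g`_2 * t).
  by exists (- g`_1 / (2 * g`_2)); field; rewrite a0 /=.
exists (g`_2), t, (g`_2 * t ^+ 2 + g`_1 * t + g`_0); split => //; split => //.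
rewrite {1}(g3 _ sg) /lin /X2 !comp_polyD !comp_polyM !comp_polyC comp_polyX ht.
rewrite comp_polyX !(rmorphD, rmorphM, rmorphN, rmorphXn, rmorph_nat, rmorph1) /=.
ring.
Qed.

Theorem theorem6p1 (f : {poly int}) :
  irreducible_poly (polyQ f) ->
  (exists g : {poly rat}, size g = 3%N /\ ~ irreducible_poly (polyQ f \Po g)) ->
  exists x y z : rat, y * z != 0 /\
    (lead_coef f)%:~R * z ^+ 2 = phi f x y.
Proof.
move=> iF [g [sg nG]].
set F := polyQ f in iF nG.
have sF1 : (1 < size F)%N by case: iF.
have F0 : F != 0 by apply: irredp_neq0.
have lF0 : lead_coef F != 0 by rewrite lead_coef_eq0.
case: (ltngtP (size F) 2) => [|s2|s2]; first by move=> h2; case: (N6 sF1 h2).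
  have [a [t [c' [a0 [_ ge]]]]] := gshift _ sg.
  set h := F \Po lin a c'.
  have sh : size h = size F by rewrite /h size_comp_poly2 // size_lin.
  have ih : irreducible_poly h.
    apply: (irr_comp_lin _ _ (lin a^-1 (- (c' / a)))) => //.
    - by rewrite size_lin.
    - by rewrite size_lin // invr_eq0.
    - by rewrite lin_comp -lin10 mulVf //; congr lin; field.
    - by rewrite lin_comp -lin10 mulfV //; congr lin; field.
  have nH : ~ irreducible_poly (h \Po X2).
    move=> iH; apply: nG.
    have e1 : (h \Po X2) \Po lin 1 (- t) = F \Po g.
      have -> : ((F \Po lin a c') \Po X2) \Po lin 1 (- t) = F \Po ((lin a c' \Po X2) \Po lin 1 (- t)) by rewrite !comp_polyA.
      by rewrite -ge -comp_polyA lin_comp !mul1r addNr lin10 comp_polyXr.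
    rewrite -e1.
    apply: (irr_comp_lin _ _ (lin 1 t)) => //.
    - by rewrite size_lin // oner_neq0.
    - by rewrite size_lin // oner_neq0.
    - by rewrite lin_comp !mul1r addNr lin10.
    - by rewrite lin_comp !mul1r addrN lin10.
  have [p [lam [sp hE]]] := key _ ih (ltac:(by rewrite sh)) nH.
  have e0 : F.[c'] = lam * (p.[0] * p.[0]).
    have := congr1 (fun u => u.[0]) hE.
    rewrite /= hornerZ hornerM !horner_comp /X2 /nX hornerM hornerX mulr0 hornerN hornerX oppr0.
    by rewrite horner_lin mulr0 add0r.
  have eL : lam * (lead_coef p * (lead_coef p * (-1) ^+ (size F).-1)) = lead_coef F * a ^+ (size F).-1.
    have := congr1 lead_coef hE.
    rewrite lead_coef_comp ?size_X2 // /X2 -expr2 lead_coefXn expr1n mulr1.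
    rewrite /h lead_coef_comp ?size_lin // lead_lin //.
    rewrite lead_coefZ lead_coefM lead_coef_comp ?size_nX // /nX lead_coefN lead_coefX.
    by rewrite sp sh => ->.
  have p0 : p.[0] != 0.
    apply/negP => /eqP r0.
    have rh : root h 0 by rewrite /root /h horner_comp horner_lin mulr0 add0r e0 r0 !mulr0.
    have Xh : 'X - 0%:P %| h by rewrite -root_factor_theorem.
    have Xhe : 'X - 0%:P %= h by apply: ih => //; rewrite size_XsubC.
    by move: s2; rewrite -sh -(eqp_size Xhe) size_XsubC.
  have lp0 : lead_coef p != 0.
    by rewrite lead_coef_eq0 -size_poly_gt0 sp sh (ltn_trans _ s2).
  exists (c' * - a^-1), (- a^-1), (p.[0] / lead_coef p); split.
    by rewrite mulf_neq0 // ?oppr_eq0 ?invr_eq0 // mulf_neq0 // invr_eq0.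
  rewrite phiE ?oppr_eq0 ?invr_eq0 // -lF -/F -sF mulfK ?oppr_eq0 ?invr_eq0 //.
  rewrite e0.
  have hl : lead_coef F = lam * (lead_coef p * (lead_coef p * (-1) ^+ (size F).-1)) / a ^+ (size F).-1.
    by rewrite eL mulfK // expf_neq0.
  have ea : (- a^-1) ^+ (size F).-1 = (-1) ^+ (size F).-1 / a ^+ (size F).-1.
    by rewrite -[- a^-1]mulN1r exprMn exprVn.
  rewrite -/F hl ea.
  have ad0 : a ^+ (size F).-1 != 0 by rewrite expf_neq0.
  move: ad0; move: (a ^+ (size F).-1) => ad ad0.
  move: ((-1) ^+ (size F).-1) => sg1.
  move: lp0; move: (lead_coef p) => lp lp0.
  field.
  by rewrite lp0 ad0.
have hF : forall x, F.[x] = F`_0 + F`_1 * x.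
  move=> x; rewrite horner_coef s2 !big_ord_recr big_ord0 /= add0r expr0 expr1 mulr1 //.
have l1 : lead_coef F = F`_1 by rewrite lead_coefE s2.
exists ((F`_1 - F`_0) / F`_1), 1, 1; split; first by rewrite mulr1 oner_neq0.
rewrite phiE ?oner_neq0 // -lF -/F divr1 expr1n mulr1 hF l1 mul1r.
field; by rewrite -l1.
Qed.
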